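(* Each of the following holds; each item asserts the existence of a probability space $(\Omega,\mathcal{F},P)$ and real random variables $X,X_1,X_2,\dots$ on it with the stated properties. (a) There exist such $X,X_n$ with $X_n\xrightarrow{S_3\text{-}d}X$ but not $X_n\xrightarrow{S_2\text{-}d}X$. (b) There exist such $X,X_n$ with $X_n\xrightarrow{S_2\text{-}d}X$ but not $X_n\xrightarrow{S_3\text{-}d}X$. (c) For every $\alpha>0$ there exist such $X,X_n$ with $X_n\xrightarrow{S_\alpha\text{-}a.s.}X$ but not $X_n\xrightarrow{S_3\text{-}d}X$. (d) There exist such $X,X_n$ such that $X_n$ converges completely to $X$ but not $X_n\xrightarrow{S_3\text{-}d}X$.
   Context: Let $X,X_1,X_2,\dots$ be real random variables on a probability space $(\Omega,\mathcal{F},P)$, and let $F_n(x)=P(X_n\le x)$ and $F(x)=P(X\le x)$. - Complete convergence: for every $\varepsilon>0$, $\sum_{n=1}^\infty P(|X_n-X|\ge\varepsilon)<\infty$. - $X_n\xrightarrow{S_\alpha\text{-}a.s.}X$ ($\alpha>0$): $\sum_{n=1}^\infty |X_n-X|^\alpha<\infty$ almost surely. - $X_n\xrightarrow{S_2\text{-}d}X$: for every continuity point $x$ of $F$, $\sum_{n=1}^\infty |F_n(x)-F(x)|<\infty$. - $X_n\xrightarrow{S_3\text{-}d}X$: for every real $t$, $\sum_{n=1}^\infty |E[e^{itX_n}]-E[e^{itX}]|<\infty$. *)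

(* Defs.v *)
From HB Require Import structures.
From mathcomp Require Import all_boot all_order all_algebra.
From mathcomp Require Import all_classical all_reals all_analysis.
Set Implicit Arguments. Unset Strict Implicit. Unset Printing Implicit Defensive.
Import Order.TTheory GRing.Theory Num.Theory.
Import numFieldNormedType.Exports.
Local Open Scope classical_set_scope.
Local Open Scope ring_scope.

(* A series of real numbers with nonnegative terms is finite
   iff its partial sums converge. *)
Definition summable (R : realType) (u : nat -> R) : Prop := cvgn (series u).

Definition Fd d (T : measurableType d) (R : realType) (P : probability T R)
  (X : {RV P >-> R}) (x : R) : R := fine (cdf X x).

(* characteristic function phi_X(t) = E[e^{itX}], given by its real part
   E[cos(tX)] and imaginary part E[sin(tX)] *)
Definition chf_re d (T : measurableType d) (R : realType) (P : probability T R)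
  (X : {RV P >-> R}) (t : R) : R := fine ('E_P[fun w => cos (t * X w)])%E.
Definition chf_im d (T : measurableType d) (R : realType) (P : probability T R)
  (X : {RV P >-> R}) (t : R) : R := fine ('E_P[fun w => sin (t * X w)])%E.

Definition chf_dist d (T : measurableType d) (R : realType) (P : probability T R)
  (X Y : {RV P >-> R}) (t : R) : R :=
  Num.sqrt ((chf_re X t - chf_re Y t) ^+ 2 + (chf_im X t - chf_im Y t) ^+ 2).

Definition complete_conv d (T : measurableType d) (R : realType) (P : probability T R)
  (Xn : nat -> {RV P >-> R}) (X : {RV P >-> R}) : Prop :=
  forall eps : R, 0 < eps ->
    summable (fun n => fine (P [set w | eps <= `|Xn n w - X w|])).

Definition S_as d (T : measurableType d) (R : realType) (P : probability T R)
  (alpha : R) (Xn : nat -> {RV P >-> R}) (X : {RV P >-> R}) : Prop :=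
  {ae P, forall w, summable (fun n => `|Xn n w - X w| `^ alpha)}.

Definition S2d d (T : measurableType d) (R : realType) (P : probability T R)
  (Xn : nat -> {RV P >-> R}) (X : {RV P >-> R}) : Prop :=
  forall x : R, {for x, continuous (Fd X)} ->
    summable (fun n => `|Fd (Xn n) x - Fd X x|).

Definition S3d d (T : measurableType d) (R : realType) (P : probability T R)
  (Xn : nat -> {RV P >-> R}) (X : {RV P >-> R}) : Prop :=
  forall t : R, summable (fun n => chf_dist (Xn n) X t).

(* Main.v *)
Require Import Defs.
From HB Require Import structures.
From mathcomp Require Import all_boot all_order all_algebra.
From mathcomp Require Import all_classical all_reals all_analysis.
From mathcomp Require Import ring lra.
Import Order.TTheory GRing.Theory Num.Theory.
Import numFieldNormedType.Exports.

Section H.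
Local Open Scope classical_set_scope.
Local Open Scope ring_scope.
Variable R : realType.

Lemma lip1 (f df : R -> R) : (forall x, is_derive (x:R) (1:R) f (df x)) ->
  (forall x, `|df x| <= 1) -> continuous f ->
  forall a b, `|f b - f a| <= `|b - a|.
Proof.
move=> hd hb hc.
have key a b : a <= b -> `|f b - f a| <= `|b - a|.
  move=> ab; have [c _ ->] := MVT_segment ab (fun x _ => hd x)
    (continuous_subspaceT hc).
  by rewrite normrM ler_piMl.
move=> a b; case: (leP a b) => ab; first exact: key.
by rewrite distrC (distrC b); apply: key; exact: ltW.
Qed.

Lemma cos_lip a b : `|cos b - cos a| <= `|b - a| :> R.
Proof.
apply: (@lip1 _ (fun x => - sin x)) => //; last exact: continuous_cos.
by move=> x; rewrite normrN sin_max.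
Qed.

Lemma sin_lip a b : `|sin b - sin a| <= `|b - a| :> R.
Proof.
apply: (@lip1 _ cos) => //; last exact: continuous_sin.
by move=> x; rewrite cos_max.
Qed.

Lemma sin_lb x : 0 <= x <= 1 -> cos 1 * x <= sin x :> R.
Proof.
move=> /andP[x0 x1].
have [c] := MVT_segment x0 (fun y _ => is_derive_sin y)
  (continuous_subspaceT (@continuous_sin R)).
rewrite in_itv/= => /andP[c0 cx].
rewrite sin0 subr0 subr0 => ->.
apply: ler_wpM2r => //.
have pi1 : 1 <= pi :> R by rewrite (le_trans _ (pi_ge2 R))// ler1n.
have c1 : c <= 1 by rewrite (le_trans cx).
move: c1; rewrite le_eqVlt => /orP[/eqP->//|c1'].
apply: ltW; rewrite ltr_cos//; rewrite in_itv/= ?c0 ?(ltW c1') ?ler01 ?(le_trans (ltW c1'))//.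

Qed.

Lemma cos1_gt0' : 0 < cos 1 :> R. Proof. exact: cos1_gt0. Qed.

End H.
Section H2.
Local Open Scope classical_set_scope.
Local Open Scope ring_scope.
Variable R : realType.

Lemma summable_ev0 (u : nat -> R) N : (forall n, (N <= n)%N -> u n = 0) ->
  Defs.summable u.
Proof.
move=> h; rewrite /Defs.summable; apply: (is_cvg_near_cst (series u N)).
exists N => // n /= Nn; apply/eqP; rewrite -subr_eq0 sub_series_geq//.
by rewrite big_nat big1// => i /andP[Ni _]; apply: h.
Qed.

Lemma summable_le (u v : nat -> R) (C : R) : 0 <= C -> (forall n, 0 <= u n) ->
  (forall n, u n <= C * v n) -> (forall n, 0 <= v n) -> Defs.summable v ->
  Defs.summable u.
Proof.
move=> C0 u0 uv v0 sv.
apply: (@series_le_cvg _ u (fun n => C * v n)) => //.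
  by move=> n; rewrite mulr_ge0.
have -> : (fun n => C * v n) = C *: v by [].
exact: is_cvg_seriesZ.
Qed.

Lemma summable_tele : Defs.summable (fun n => ((n.+1 * n.+2)%:R)^-1 : R).
Proof.
rewrite /Defs.summable; apply: nondecreasing_is_cvgn.
  apply: nondecreasing_series => n _ _; rewrite invr_ge0 ler0n//.
exists 1 => _ [n _ <-].
have -> : series (fun n => ((n.+1 * n.+2)%:R)^-1 : R) n = 1 - (n.+1%:R)^-1.
  elim: n => [|n IH]; first by rewrite /series/= big_nil invr1 subrr.
  rewrite seriesSr IH natrM.
  field.
  by apply/andP; split; apply/negP => /eqP; have := ler0n R n; lra.
by rewrite gerBl invr_ge0 ler0n.
Qed.

Lemma not_summable (u : nat -> R) (c : R) : 0 < c ->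
  (forall n, c * harmonic n <= u n) -> ~ Defs.summable u.
Proof.
move=> c0 hu su; apply: (@dvg_harmonic R).
apply: (@series_le_cvg _ _ (fun n => c^-1 * u n)).
- exact: harmonic_ge0.
- move=> n; apply: mulr_ge0; first by rewrite invr_ge0 ltW.
  apply: le_trans (hu n); apply: mulr_ge0; [exact: ltW | exact: harmonic_ge0].
- by move=> n; rewrite ler_pdivlMl// hu.
- have -> : (fun n => c^-1 * u n) = c^-1 *: u by [].
  exact: is_cvg_seriesZ.
Qed.

End H2.

Section P1.
Local Open Scope classical_set_scope.
Local Open Scope ring_scope.
Variable R : realType.

Definition UP := uniform_prob (@ltr01 R).

Lemma UPE (A : set _) : measurable A -> UP A = lebesgue_measure (A `&` `[0%R, 1%R]).
Proof.
move=> mA; rewrite /UP /uniform_prob integral_uniform_pdf.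
rewrite (eq_integral (fun=> 1%:E)); last first.
  move=> x; rewrite inE/= => -[_]; rewrite in_itv/= /uniform_pdf => ->.
  by rewrite subr0 invr1.
rewrite integral_cst ?mul1e//; exact: measurableI.
Qed.

Lemma UP_oc (r : R) : 0 <= r <= 1 -> UP `]0, r] = r%:E.
Proof.
move=> /andP[r0 r1]; rewrite UPE//.
have -> : `]0, r]%classic `&` `[0, 1]%classic = `]0, r]%classic :> set R.
  apply/seteqP; split => x /=; rewrite !in_itv/=.
    by case.
  move=> /andP[x0 xr]; split; first by rewrite x0 xr.
  by rewrite (ltW x0) (le_trans xr r1).
rewrite (@lebesgue_measure_itv R `]0, r]%R)/= lte_fin.
case: ltP => r0'; first by rewrite oppr0 adde0.
by have -> : r = 0 by apply/eqP; rewrite eq_le r0' r0.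
Qed.

Lemma harm_small (w : R) : 0 < w -> exists N, forall n, (N <= n)%N -> harmonic n < w.
Proof.
move=> w0; have := cvgr_lt 0 (@cvg_harmonic R) w w0.
by case=> N _ hN; exists N => n Nn; exact: hN.
Qed.


Lemma Fd_cst (c x : R) : Fd (cst c : {RV UP >-> R}) x = if c <= x then 1 else 0.
Proof.
rewrite /Fd /cdf /distribution /pushforward.
case: ifPn => cx.
  have -> : (cst c : {RV UP >-> R}) @^-1` `]-oo, x] = setT.
    by apply/seteqP; split => w //= _; rewrite in_itv/= cx.
  by rewrite probability_setT.
have -> : (cst c : {RV UP >-> R}) @^-1` `]-oo, x] = set0.
  by apply/seteqP; split => w //=; rewrite in_itv/= (negbTE cx).
by rewrite measure0.
Qed.

Lemma chf_im_cst (c t : R) : chf_im (cst c : {RV UP >-> R}) t = sin (t * c).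
Proof.
rewrite /chf_im.
have -> : (fun w => sin (t * (cst c : {RV UP >-> R}) w)) = cst (sin (t * c)) by [].
by rewrite expectation_cst.
Qed.

Lemma chf_dist_ge {d} {T : measurableType d} {P : probability T R} (X Y : {RV P >-> R}) t :
  `|chf_im X t - chf_im Y t| <= chf_dist X Y t.
Proof.
rewrite /chf_dist -sqrtr_sqr; apply: ler_wsqrtr.
by rewrite lerDr sqr_ge0.
Qed.

Definition Xb (n : nat) : {RV UP >-> R} := cst (- harmonic n).
Definition X0 : {RV UP >-> R} := cst 0.

Lemma not_S3d_b : ~ S3d Xb X0.
Proof.
move=> /(_ 1); apply: (@not_summable _ _ (cos 1)); first exact: cos1_gt0.
move=> n; apply: le_trans (chf_dist_ge (Xb n) X0 1); rewrite /Xb /X0 !chf_im_cst.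
rewrite !mul1r sin0 subr0 sinN normrN.
have h0 : 0 <= harmonic n :> R by exact: harmonic_ge0.
have h1 : harmonic n <= 1 :> R by rewrite /= invf_le1// ler1n.
have hs := @sin_lb R (harmonic n) (introT andP (conj h0 h1)).
rewrite ger0_norm // (le_trans _ hs) //.
by apply: mulr_ge0 => //; apply: ltW; exact: cos1_gt0.
Qed.

Lemma S2d_b : S2d Xb X0.
Proof.
move=> x _; rewrite /Xb /X0.
case: (leP 0 x) => x0.
  apply: (@summable_ev0 _ _ 0) => n _; rewrite !Fd_cst x0.
  have -> : - harmonic n <= x by rewrite (le_trans _ x0)// oppr_le0 harmonic_ge0.
  by rewrite subrr normr0.
have [|N hN] := harm_small (- x); first by rewrite oppr_gt0.
apply: (@summable_ev0 _ _ N) => n Nn; rewrite !Fd_cst.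
have -> : (0 <= x) = false by rewrite leNgt x0.
have -> : (- harmonic n <= x) = false by rewrite leNgt ltrNr hN.
by rewrite subrr normr0.
Qed.

Lemma cc_b : complete_conv Xb X0.
Proof.
move=> eps e0; have [N hN] := harm_small _ e0.
apply: (@summable_ev0 _ _ N) => n Nn.
have -> : [set w | eps <= `|Xb n w - X0 w|] = set0.
  apply/seteqP; split => w //=; rewrite /Xb /X0 /= subr0 normrN.
  by rewrite ger0_norm ?harmonic_ge0// leNgt hN.
by rewrite measure0.
Qed.

Lemma mA (n : nat) : measurable (`]0, harmonic n]%classic : set (measurableTypeR R)).
Proof. exact: measurable_itv. Qed.

Definition Xc (n : nat) : {RV UP >-> R} := @measurable_realfun.indic_mfun _ _ _ _ (mA n).

Lemma Xc_out n w : ~ (0 < w <= harmonic n) -> Xc n w = 0.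
Proof.
move=> h; rewrite /Xc /measurable_realfun.indic_mfun /= measurable_realfun.mindicE memNset//=.
Qed.

Lemma S_as_c alpha : 0 < alpha -> S_as alpha Xc X0.
Proof.
move=> a0; apply: aeW => w.
have [N hN] : exists N, forall n, (N <= n)%N -> Xc n w = 0.
  case: (ltP 0 w) => w0.
    have [N hN] := harm_small _ w0; exists N => n Nn; apply: Xc_out.
    by move=> /andP[_ wh]; have := hN n Nn; rewrite ltNge wh.
  by exists 0%N => n _; apply: Xc_out => /andP[w0' _]; move: w0; rewrite leNgt w0'.
apply: (@summable_ev0 _ _ N) => n Nn.
by rewrite hN// /X0 /= subr0 normr0 powR0// gt_eqF.
Qed.

Lemma chf_im_c n : chf_im (Xc n) 1 = sin 1 * harmonic n.
Proof.
rewrite /chf_im.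
have -> : (fun w => sin (1 * Xc n w)) = (fun w => sin 1 * \1_(`]0, harmonic n]%classic) w).
  apply/funext => w; rewrite /Xc /measurable_realfun.indic_mfun /= measurable_realfun.mindicE indicE mul1r.
  by case: (_ \in _); rewrite ?mulr1 ?mulr0 ?sin0.
rewrite unlock.
under eq_integral do rewrite EFinM.
rewrite ge0_integralZl_EFin//.
- rewrite integral_indic ?mA// setIT.
  have := @UP_oc (harmonic n); rewrite harmonic_ge0 /= invf_le1// ler1n => /(_ isT) E.
  transitivity (fine ((sin 1)%:E * (harmonic n : R)%:E)); last by rewrite -EFinM.
  by congr (fine (_ * _)); exact: E.
- by apply/measurable_realfun.measurable_EFinP; apply: measurable_realfun.measurable_indic; exact: mA.
- apply: sin_ge0_pi; rewrite ler01 (le_trans _ (pi_ge2 R))// ler1n//.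
Qed.

Lemma not_S3d_c : ~ S3d Xc X0.
Proof.
move=> /(_ 1); apply: (@not_summable _ _ (sin 1)).
  by apply: sin_gt0_pi; rewrite ltr01 (lt_le_trans _ (pi_ge2 R))// ltr1n.
move=> n; apply: le_trans (chf_dist_ge (Xc n) X0 1).
rewrite chf_im_c /X0 chf_im_cst mulr0 sin0 subr0 ger0_norm//.
apply: mulr_ge0; last exact: harmonic_ge0.
by apply: sin_ge0_pi; rewrite ler01 (le_trans _ (pi_ge2 R))// ler1n.
Qed.

End P1.

Section P2.
Local Open Scope classical_set_scope.
Local Open Scope ring_scope.
Variable R : realType.

Lemma int_b {d} {T : measurableType d} (P : probability T R) (f : T -> R) :
  measurable_fun setT f -> (forall w, `|f w| <= 1) ->
  P.-integrable setT (EFin \o f).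
Proof.
move=> mf fb; apply/integrableP; split; first exact/measurable_realfun.measurable_EFinP.
apply: le_lt_trans.
  apply: (integral_le_bound 1%:E) => //.
  - by apply/measurable_realfun.measurable_EFinP.
  - by apply: aeW => w _; rewrite lee_fin.

rewrite mul1e; apply: (le_lt_trans (probability_le1 P measurableT)); exact: ltry.
Qed.

Lemma E_diff {d} {T : measurableType d} (P : probability T R) (f g : T -> R) (K : R) :
  measurable_fun setT f -> measurable_fun setT g ->
  (forall w, `|f w| <= 1) -> (forall w, `|g w| <= 1) ->
  (forall w, `|f w - g w| <= K) -> 0 <= K ->
  `|fine ('E_P[f]) - fine ('E_P[g])| <= K.
Proof.
move=> mf mg fb gb fgK K0.
have If := int_b P f mf fb; have Ig := int_b P g mg gb.
rewrite unlock.
have ff := integrable_fin_num measurableT If.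
have gf := integrable_fin_num measurableT Ig.
rewrite -fineB// -integralB_EFin//.
have hf : (\int[P]_(x in setT) ((f x)%:E - (g x)%:E))%E \is a fin_num.
  by rewrite integralB_EFin// fin_numB ff gf.
rewrite -fine_abse// -lee_fin fineK ?abse_fin_num//.
apply: (le_trans (le_abse_integral _ _ _)) => //.
  by apply/measurable_realfun.measurable_EFinP; exact: measurable_realfun.measurable_funB.
apply: (@le_trans _ _ (K%:E * P setT)%E); last by rewrite -[leRHS]mule1; apply: lee_wpmul2l; [rewrite lee_fin | exact: probability_le1].
apply: integral_le_bound => //.
- by apply/measurable_realfun.measurable_EFinP; exact: measurable_realfun.measurable_funB.
- by apply: aeW => w _; rewrite -EFinB lee_fin.
Qed.

Lemma sqrt_le_add (a b : R) : Num.sqrt (a ^+ 2 + b ^+ 2) <= `|a| + `|b|.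
Proof.
have ha := normr_ge0 a; have hb := normr_ge0 b.
rewrite -[leRHS](@ger0_norm _ (`|a| + `|b|)); last exact: addr_ge0.
rewrite -sqrtr_sqr; apply: ler_wsqrtr.
rewrite -(real_normK (num_real a)) -(real_normK (num_real b)).
have : 0 <= `|a| * `|b| by exact: mulr_ge0.
set x := `|a|; set y := `|b|; move=> h; nra.
Qed.

Lemma mtrig {d} {T : measurableType d} (h : R -> R) (t : R) (X : T -> R) :
  continuous h -> measurable_fun setT X -> measurable_fun setT (fun w => h (t * X w)).
Proof.
move=> hc mX; apply: (@measurableT_comp _ _ _ _ _ _ h _ (fun w => t * X w)).
  exact: measurable_realfun.continuous_measurable_fun.
by apply: measurable_realfun.measurable_funM => //.
Qed.

Lemma chf_dist_le {d} {T : measurableType d} {P : probability T R}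
  (X Y : {RV P >-> R}) t K : 0 <= K ->
  (forall w, `|t * X w - t * Y w| <= K) -> chf_dist X Y t <= K + K.
Proof.
move=> K0 hK; rewrite /chf_dist; apply: le_trans (sqrt_le_add _ _) _.
apply: lerD; apply: E_diff => //.
- exact: (mtrig _ _ _ (@continuous_cos R) (measurable_funP X)).
- exact: (mtrig _ _ _ (@continuous_cos R) (measurable_funP Y)).
- by move=> w; exact: cos_max.
- by move=> w; exact: cos_max.
- by move=> w; exact: le_trans (cos_lip _ _ _) (hK w).
- exact: (mtrig _ _ _ (@continuous_sin R) (measurable_funP X)).
- exact: (mtrig _ _ _ (@continuous_sin R) (measurable_funP Y)).
- by move=> w; exact: sin_max.
- by move=> w; exact: sin_max.
- by move=> w; exact: le_trans (sin_lip _ _ _) (hK w).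
Qed.

End P2.


Section P3.
Local Open Scope classical_set_scope.
Local Open Scope ring_scope.
Variable R : realType.

Let idTR : measurableTypeR R -> R := idfun.
Definition idR : {mfun measurableTypeR R >-> R} := mfun_Sub (mem_set (@measurable_id _ _ setT) : idTR \in mfun).

Lemma mY (c : R) : measurable_fun setT (fun w : measurableTypeR R => c - idTR w * idTR w).
Proof.
apply: measurable_realfun.measurable_funB => //.
by apply: measurable_realfun.measurable_funM; exact: (@measurable_id _ _ setT).
Qed.

Definition Y (c : R) : {mfun measurableTypeR R >-> R} := mfun_Sub (mem_set (mY c) : _ \in mfun).

Lemma YE c w : Y c w = c - w * w.
Proof. by []. Qed.

Definition dl (n : nat) : R := ((n.+1 * n.+2)%:R)^-1.
Definition Xa (n : nat) : {RV (@UP R) >-> R} := Y (dl n).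
Definition Xa0 : {RV (@UP R) >-> R} := Y 0.

Lemma dl_ge0 n : 0 <= dl n.
Proof. by rewrite /dl invr_ge0 ler0n. Qed.

Lemma S3d_a : S3d Xa Xa0.
Proof.
move=> t.
apply: (@summable_le _ _ dl (`|t| + `|t|)).
- by rewrite addr_ge0.
- by move=> n; rewrite /chf_dist sqrtr_ge0.
- move=> n; rewrite mulrDl; apply: chf_dist_le.
    by rewrite mulr_ge0 // dl_ge0.
  move=> w; rewrite /Xa /Xa0 !YE.
  have -> : t * (dl n - w * w) - t * (0 - w * w) = t * dl n by ring.
  by rewrite normrM (ger0_norm (dl_ge0 n)).
- exact: dl_ge0.
- exact: summable_tele.
Qed.

Lemma UP_cc (b : R) : 0 <= b <= 1 -> UP R `[b, 1] = (1 - b)%:E.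
Proof.
move=> /andP[b0 b1]; rewrite UPE//.
have -> : `[b, 1]%classic `&` `[0, 1]%classic = `[b, 1]%classic :> set R.
  apply/seteqP; split => x /=; rewrite !in_itv/=.
    by case.
  move=> /andP[bx x1]; split; first by rewrite bx x1.
  by rewrite x1 (le_trans b0 bx).
rewrite (@lebesgue_measure_itv R `[b, 1]%R)/= lte_fin.
case: ltP => b1'; first by rewrite EFinB.
have -> : b = 1 by apply/le_anti; rewrite b1 b1'.
by rewrite subrr.
Qed.

Lemma Fd_a0_ge (b y : R) : 0 <= b <= 1 -> - (b * b) <= y -> 1 - b <= Fd Xa0 y.
Proof.
move=> /andP[b0 b1] hy; rewrite /Fd /cdf /distribution /pushforward.
set S := _ @^-1` _.
have mS : measurable S by apply: measurable_funPTI; exact: measurable_itv.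
have sub : `[b, 1]%classic `<=` S.
  move=> w /=; rewrite in_itv/= => /andP[bw w1].
  rewrite /S /= in_itv/= /idTR /= sub0r (le_trans _ hy)// lerN2.
  by apply: ler_pM => //; exact: le_trans bw.
have H : (UP R `[b, 1%R] <= UP R S)%E :=
  @le_measure _ _ _ (UP R) _ _ (mem_set (measurable_itv `[b, 1%R])) (mem_set mS) sub.
rewrite UP_cc ?b0 ?b1// in H.
have fS : UP R S \is a fin_num.
  rewrite ge0_fin_numE ?measure_ge0//; apply: (le_lt_trans (probability_le1 _ mS)); exact: ltry.
by rewrite -lee_fin fineK.
Qed.

Lemma fine_UP_le1 (S : set (measurableTypeR R)) : measurable S -> fine (UP R S) <= 1.
Proof.
move=> mS.
have fS : UP R S \is a fin_num.
  rewrite ge0_fin_numE ?measure_ge0//; apply: (le_lt_trans (probability_le1 _ mS)); exact: ltry.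
by rewrite -lee_fin fineK// probability_le1.
Qed.

Lemma Fd_a0_le1 y : Fd Xa0 y <= 1.
Proof.
rewrite /Fd /cdf /distribution /pushforward; apply: fine_UP_le1.
by apply: measurable_funPTI; exact: measurable_itv.
Qed.

Lemma Fd_a0_0 : Fd Xa0 0 = 1.
Proof.
rewrite /Fd /cdf /distribution /pushforward.
have -> : Xa0 @^-1` `]-oo, 0] = setT.
  apply/seteqP; split => w //= _; rewrite in_itv/= /idTR /= sub0r oppr_le0.
  exact: mulr_ge0 (le_refl _) _ || by rewrite -expr2 sqr_ge0.
by rewrite probability_setT.
Qed.

Lemma Fd_a0_cont : {for 0, continuous (Fd Xa0)}.
Proof.
apply/cvgrPdist_le => e e0.
set b := Num.min e 1.
have b0 : 0 < b by rewrite lt_min e0 ltr01.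
have b1 : b <= 1 by rewrite ge_min lexx orbT.
have be : b <= e by rewrite ge_min lexx.
near=> y.
have hy : - (b * b) <= y.
  have : `|y| < b * b.
    near: y; exists (b * b) => /=; first by rewrite mulr_gt0.
    by move=> z; rewrite /ball_ /= sub0r normrN.
  by rewrite ltr_norml => /andP[h _]; exact: ltW.
have h := @Fd_a0_ge b y (introT andP (conj (ltW b0) b1)) hy.
have h1 := Fd_a0_le1 y.
rewrite Fd_a0_0 ger0_norm ?subr_ge0//.
clearbody b; lra.
Unshelve. all: by end_near. Qed.

Lemma Fd_a_le n : Fd (Xa n) 0 + harmonic n.+1 <= 1.
Proof.
rewrite /Fd /cdf /distribution /pushforward.
set S := _ @^-1` _.
have mS : measurable S by apply: measurable_funPTI; exact: measurable_itv.
pose A : set (measurableTypeR R) := `]0, harmonic n.+1]%classic.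
have mAA : measurable A by exact: measurable_itv.
have hh : harmonic n.+1 * harmonic n.+1 < dl n.
  rewrite /= /dl -invfM -natrM ltf_pV2 ?posrE ?ltr0n ?muln_gt0// ltr_nat.
  by rewrite ltn_pmul2r.
have dis : S `&` A = set0.
  apply/seteqP; split => w //=; rewrite /S /A /= !in_itv /= /idTR /=.
  move=> [h1 /andP[w0 wh]].
  have : w * w <= harmonic n.+1 * harmonic n.+1 by apply: ler_pM => //; exact: ltW.
  move: hh h1 => a; rewrite subr_le0 => b c.
  by have := le_lt_trans c a; rewrite ltNge b.
have U : (UP R (S `|` A) = UP R S + UP R A)%E := @measureU _ _ _ (UP R) _ _ mS mAA dis.
have le1 : (UP R (S `|` A) <= 1)%E := probability_le1 _ (measurableU _ _ mS mAA).
have UA : UP R A = (harmonic n.+1)%:E.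
  apply: UP_oc; rewrite harmonic_ge0 /= invf_le1// ler1n//.
have fS : UP R S \is a fin_num.
  rewrite ge0_fin_numE ?measure_ge0//; apply: (le_lt_trans (probability_le1 _ mS)); exact: ltry.
rewrite U UA -(fineK fS) -EFinD lee_fin in le1.
exact: le1.
Qed.

Lemma not_S2d_a : ~ S2d Xa Xa0.
Proof.
move=> /(_ 0 Fd_a0_cont); apply: (@not_summable _ _ 2^-1) => //.
move=> n; rewrite Fd_a0_0.
have h := Fd_a_le n.
have hn : 2^-1 * harmonic n <= harmonic n.+1 :> R.
  rewrite /= -invfM lef_pV2 ?posrE ?mulr_gt0 ?ltr0n// -[2]/(2%:R) -natrM ler_nat.
  by rewrite mul2n -addnn addSn ltnS leq_addl.
have h0 := @harmonic_ge0 R n.+1.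
rewrite distrC ger0_norm; lra.
Qed.

End P3.

Local Open Scope ring_scope.

Theorem mainTheorem4 (R : realType) :
  (exists (d : measure_display) (T : measurableType d) (P : probability T R)
      (Xn : nat -> {RV P >-> R}) (X : {RV P >-> R}),
      S3d Xn X /\ ~ S2d Xn X) /\
  (exists (d : measure_display) (T : measurableType d) (P : probability T R)
      (Xn : nat -> {RV P >-> R}) (X : {RV P >-> R}),
      S2d Xn X /\ ~ S3d Xn X) /\
  (forall alpha : R, 0 < alpha ->
    exists (d : measure_display) (T : measurableType d) (P : probability T R)
      (Xn : nat -> {RV P >-> R}) (X : {RV P >-> R}),
      S_as alpha Xn X /\ ~ S3d Xn X) /\
  (exists (d : measure_display) (T : measurableType d) (P : probability T R)
      (Xn : nat -> {RV P >-> R}) (X : {RV P >-> R}),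
      complete_conv Xn X /\ ~ S3d Xn X).
Proof.
split; [|split; [|split]].
- exists _, _, (UP R), (@Xa R), (@Xa0 R); split; [exact: S3d_a | exact: not_S2d_a].
- exists _, _, (UP R), (@Xb R), (@X0 R); split; [exact: S2d_b | exact: not_S3d_b].
- move=> alpha a0; exists _, _, (UP R), (@Xc R), (@X0 R).
  split; [exact: S_as_c | exact: not_S3d_c].
- exists _, _, (UP R), (@Xb R), (@X0 R); split; [exact: cc_b | exact: not_S3d_b].
Qed.
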